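(* Let $\mathbb{E}$ be a regular category, $\Sigma$ a fibrational class of split epimorphisms, and suppose $\mathbb{E}$ is a $\Sigma$-Mal'tsev category. Let $(f,s)\colon X\rightleftarrows Y$ and $(f',s')\colon X'\rightleftarrows Y'$ be split epimorphisms and $x\colon X\to X'$, $y\colon Y\to Y'$ regular epimorphisms with $f'x=yf$ and $xs=s'y$. If $(f,s)\in\Sigma$, then the square $f'x=yf$ is a regular pushout, i.e. the induced morphism $(f,x)\colon X\to Y\times_{Y'}X'$ into the pullback of $f'$ along $y$ is a regular epimorphism.
   Context: A split epimorphism is a pair $(f,s)$ with $fs=1$. A class $\Sigma$ of split epimorphisms is fibrational if it contains all split epimorphisms $(f,s)$ with $f$ invertible and is stable under pullback along any morphism. A pair of morphisms with common codomain $Z$ is jointly extremally epic if it factors jointly through no non-invertible monomorphism into $Z$. $\mathbb{E}$ is $\Sigma$-Mal'tsev if for every split epimorphism $(f,s)\colon X\rightleftarrows Y$ in $\Sigma$ and every split epimorphism $(g,t)$ with $g\colon Y'\to Y$, letting $X'=Y'\times_YX$, $s'=(1_{Y'},sg)$, $\bar t=(tf,1_X)$, the pair $(s',\bar t)$ is jointly extremally epic. *)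

(* Defs.v *)
Set Implicit Arguments.
Unset Strict Implicit.

(** Categories (composition written [comp g f] = g ∘ f). *)
Record Category := {
  Obj :> Type;
  Hom : Obj -> Obj -> Type;
  id : forall A, Hom A A;
  comp : forall A B C, Hom B C -> Hom A B -> Hom A C;
  comp_assoc : forall A B C D (h : Hom C D) (g : Hom B C) (f : Hom A B),
      comp h (comp g f) = comp (comp h g) f;
  comp_id_l : forall A B (f : Hom A B), comp (id B) f = f;
  comp_id_r : forall A B (f : Hom A B), comp f (id A) = f
}.

Arguments Hom {c} _ _.
Arguments id {c} _.
Arguments comp {c A B C} _ _.

Section Notions.
Variable C : Category.

Definition is_mono {A B : C} (m : Hom A B) : Prop :=
  forall Z (u v : Hom Z A), comp m u = comp m v -> u = v.

Definition is_iso {A B : C} (f : Hom A B) : Prop :=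
  exists g : Hom B A, comp g f = id A /\ comp f g = id B.

Definition is_pullback {A B Z P : C} (f : Hom A Z) (g : Hom B Z)
  (p1 : Hom P A) (p2 : Hom P B) : Prop :=
  comp f p1 = comp g p2 /\
  forall Q (q1 : Hom Q A) (q2 : Hom Q B), comp f q1 = comp g q2 ->
    exists u : Hom Q P, comp p1 u = q1 /\ comp p2 u = q2 /\
      forall u' : Hom Q P, comp p1 u' = q1 -> comp p2 u' = q2 -> u' = u.

Definition is_terminal (T : C) : Prop :=
  forall A : C, exists t : Hom A T, forall t' : Hom A T, t' = t.

Definition is_coequalizer {K A B : C} (u v : Hom K A) (e : Hom A B) : Prop :=
  comp e u = comp e v /\
  forall D (h : Hom A D), comp h u = comp h v ->
    exists k : Hom B D, comp k e = h /\
      forall k' : Hom B D, comp k' e = h -> k' = k.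

Definition is_regular_epi {A B : C} (e : Hom A B) : Prop :=
  exists K (u v : Hom K A), is_coequalizer u v e.

Definition is_regular_category : Prop :=
  (exists T : C, is_terminal T) /\
  (forall A B Z (f : Hom A Z) (g : Hom B Z),
      exists P (p1 : Hom P A) (p2 : Hom P B), is_pullback f g p1 p2) /\
  (forall A B (f : Hom A B), exists M (e : Hom A M) (m : Hom M B),
      is_regular_epi e /\ is_mono m /\ comp m e = f) /\
  (forall A B Z P (f : Hom A Z) (g : Hom B Z) (p1 : Hom P A) (p2 : Hom P B),
      is_pullback f g p1 p2 -> is_regular_epi f -> is_regular_epi p2).

Definition SplitEpiClass := forall X Y : C, Hom X Y -> Hom Y X -> Prop.

Definition is_split_epi_class (Sigma : SplitEpiClass) : Prop :=
  forall X Y (f : Hom X Y) (s : Hom Y X), Sigma X Y f s -> comp f s = id Y.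

(** Fibrational: contains every split epi (f,s) with f invertible, and is
    stable under pullback along any morphism g : Y' -> Y (the pulled-back
    split epi being (p1, (1_{Y'}, s g)) with X' = Y' ×_Y X). *)
Definition is_fibrational (Sigma : SplitEpiClass) : Prop :=
  is_split_epi_class Sigma /\
  (forall X Y (f : Hom X Y) (s : Hom Y X),
      comp f s = id Y -> is_iso f -> Sigma X Y f s) /\
  (forall X Y (f : Hom X Y) (s : Hom Y X), Sigma X Y f s ->
    forall Y' (g : Hom Y' Y) X' (p1 : Hom X' Y') (p2 : Hom X' X),
      is_pullback g f p1 p2 ->
      forall s' : Hom Y' X', comp p1 s' = id Y' -> comp p2 s' = comp s g ->
      Sigma X' Y' p1 s').

Definition jointly_extremally_epic {A B Z : C} (u : Hom A Z) (v : Hom B Z)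
  : Prop :=
  forall M (m : Hom M Z), is_mono m ->
    (exists a : Hom A M, comp m a = u) ->
    (exists b : Hom B M, comp m b = v) ->
    is_iso m.

Definition is_Sigma_Maltsev (Sigma : SplitEpiClass) : Prop :=
  forall X Y (f : Hom X Y) (s : Hom Y X), Sigma X Y f s ->
  forall Y' (g : Hom Y' Y) (t : Hom Y Y'), comp g t = id Y ->
  forall X' (p1 : Hom X' Y') (p2 : Hom X' X), is_pullback g f p1 p2 ->
  forall (s' : Hom Y' X') (tbar : Hom X X'),
    comp p1 s' = id Y' -> comp p2 s' = comp s g ->
    comp p1 tbar = comp t f -> comp p2 tbar = id X ->
    jointly_extremally_epic s' tbar.

End Notions.

(* Main.v *)
Require Import Defs.
Section H.
Variable E : Category.

Lemma pb_ext {A B Z P Q : E} (f : Hom A Z) (g : Hom B Z) (p1 : Hom P A) (p2 : Hom P B)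
  (H : is_pullback f g p1 p2) (a b : Hom Q P) :
  comp p1 a = comp p1 b -> comp p2 a = comp p2 b -> a = b.
Proof.
  intros H1 H2. destruct H as [Hc Hu].
  destruct (Hu Q (comp p1 a) (comp p2 a)) as [w [_ [_ Hw]]].
  { rewrite !comp_assoc, Hc. reflexivity. }
  rewrite (Hw a eq_refl eq_refl), (Hw b (eq_sym H1) (eq_sym H2)). reflexivity.
Qed.

Lemma pb_mono {A B Z P : E} (f : Hom A Z) (g : Hom B Z) (p1 : Hom P A) (p2 : Hom P B)
  (H : is_pullback f g p1 p2) : is_mono g -> is_mono p1.
Proof.
  intros Hg Q a b Hab. apply (@pb_ext _ _ _ _ _ f g p1 p2 H); [exact Hab|].
  apply Hg. rewrite !comp_assoc. destruct H as [Hc _]. rewrite <- Hc, <- !comp_assoc, Hab. reflexivity.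
Qed.

Lemma regepi_mono_iso {A B M : E} (r : Hom A B) (m : Hom M B) (k : Hom A M) :
  is_regular_epi r -> is_mono m -> comp m k = r -> is_iso m.
Proof.
  intros [K [a [b [Hc Hu]]]] Hm Hr.
  assert (Hk : comp k a = comp k b).
  { apply Hm. rewrite !comp_assoc, Hr. exact Hc. }
  destruct (Hu M k Hk) as [k' [Hk' _]].
  destruct (Hu B r Hc) as [z [_ Hz]].
  assert (E1 : comp m k' = id B).
  { rewrite (Hz (comp m k')), (Hz (id B)); [reflexivity| apply comp_id_l |].
    rewrite <- comp_assoc, Hk'. exact Hr. }
  exists k'. split; [|exact E1].
  apply Hm. rewrite comp_assoc, E1, comp_id_l, comp_id_r. reflexivity.
Qed.

Lemma iso_regepi {A B M : E} (e : Hom A M) (m : Hom M B) :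
  is_regular_epi e -> is_iso m -> is_regular_epi (comp m e).
Proof.
  intros [K [a [b [Hc Hu]]]] [mi [H1 H2]].
  exists K, a, b. split.
  - rewrite <- !comp_assoc, Hc. reflexivity.
  - intros D h Hh. destruct (Hu D h Hh) as [k [Hk Hk']].
    exists (comp k mi). split.
    + rewrite <- comp_assoc, (comp_assoc mi m e), H1, comp_id_l. exact Hk.
    + intros k'' H''. rewrite <- (Hk' (comp k'' m)).
      * rewrite <- comp_assoc, H2, comp_id_r. reflexivity.
      * rewrite <- comp_assoc. exact H''.
Qed.
End H.
Arguments pb_ext {E A B Z P Q f g p1 p2} H {a b}.
Arguments pb_mono {E A B Z P f g p1 p2} H _.
Arguments regepi_mono_iso {E A B M r m k} _ _ _.
Arguments iso_regepi {E A B M e m} _ _.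

Theorem proposition7p6 (E : Category) (Sigma : SplitEpiClass E)
  (HE : is_regular_category E)
  (HSigma : is_fibrational Sigma)
  (HM : is_Sigma_Maltsev Sigma)
  (X Y X' Y' : E)
  (f : Hom X Y) (s : Hom Y X) (hfs : comp f s = id Y)
  (f' : Hom X' Y') (s' : Hom Y' X') (hfs' : comp f' s' = id Y')
  (x : Hom X X') (y : Hom Y Y')
  (hx : is_regular_epi x) (hy : is_regular_epi y)
  (hsq1 : comp f' x = comp y f) (hsq2 : comp x s = comp s' y)
  (hS : Sigma X Y f s)
  (P : E) (q1 : Hom P Y) (q2 : Hom P X') (hP : is_pullback y f' q1 q2)
  (u : Hom X P) (hu1 : comp q1 u = f) (hu2 : comp q2 u = x) :
  is_regular_epi u.
Proof.
  destruct HE as [_ [Hpb [Hfact Hstab]]].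
  destruct (Hpb _ _ _ y y) as [K [k1 [k2 HK]]].
  destruct (proj2 HK Y (id Y) (id Y) eq_refl) as [d [Hd1 [Hd2 _]]].
  destruct (Hpb _ _ _ k1 f) as [X2 [p1 [p2 HX2]]].
  destruct (proj2 HX2 K (id K) (comp s k1)) as [s2 [Hs21 [Hs22 _]]].
  { rewrite comp_id_r, comp_assoc, hfs, comp_id_l. reflexivity. }
  destruct (proj2 HX2 X (comp d f) (id X)) as [tb [Htb1 [Htb2 _]]].
  { rewrite comp_id_r, comp_assoc, Hd1, comp_id_l. reflexivity. }
  destruct (proj2 hP X2 (comp k2 p1) (comp x p2)) as [phi [Hphi1 [Hphi2 _]]].
  { rewrite !comp_assoc, <- (proj1 HK), hsq1, <- !comp_assoc, (proj1 HX2). reflexivity. }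
  destruct (Hfact _ _ u) as [M [e [m [He [Hm Hme]]]]].
  destruct (Hpb _ _ _ phi m) as [N [n1 [n2 HN]]].
  assert (Hjee : jointly_extremally_epic s2 tb).
  { apply (HM X Y f s hS K k1 d Hd1 X2 p1 p2 HX2 s2 tb); assumption. }
  assert (Hn1 : is_iso n1).
  { apply (Hjee N n1).
    - exact (pb_mono HN Hm).
    - destruct (proj2 HN K s2 (comp e (comp s k2))) as [w [Hw1 _]].
      + apply (pb_ext hP).
        * rewrite comp_assoc, Hphi1, <- comp_assoc, Hs21, comp_id_r.
          rewrite (comp_assoc m e), Hme, !comp_assoc, hu1, hfs, comp_id_l. reflexivity.
        * rewrite comp_assoc, Hphi2, <- comp_assoc, Hs22.
          rewrite (comp_assoc m e), Hme, !comp_assoc, hu2, hsq2, <- !comp_assoc, (proj1 HK). reflexivity.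
      + exists w. exact Hw1.
    - destruct (proj2 HN X tb e) as [w [Hw1 _]].
      + apply (pb_ext hP).
        * rewrite comp_assoc, Hphi1, <- comp_assoc, Htb1, Hme, comp_assoc, Hd2, comp_id_l, hu1. reflexivity.
        * rewrite comp_assoc, Hphi2, <- comp_assoc, Htb2, comp_id_r, Hme, hu2. reflexivity.
      + exists w. exact Hw1. }
  destruct Hn1 as [j [Hj1 Hj2]].
  assert (Hphireg : is_regular_epi phi).
  { apply (Hstab _ _ _ _ x q2 p2 phi); [|exact hx].
    split; [symmetry; exact Hphi2|].
    intros Q a b Hab.
    destruct (proj2 HK Q (comp f a) (comp q1 b)) as [k [Hk1 [Hk2 _]]].
    { rewrite !comp_assoc, <- hsq1, (proj1 hP), <- !comp_assoc, Hab. reflexivity. }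
    destruct (proj2 HX2 Q k a Hk1) as [w [Hw1 [Hw2 Hw3]]].
    exists w. split; [exact Hw2|]. split.
    - apply (pb_ext hP).
      + rewrite comp_assoc, Hphi1, <- comp_assoc, Hw1. exact Hk2.
      + rewrite comp_assoc, Hphi2, <- comp_assoc, Hw2. exact Hab.
    - intros w' Hw'1 Hw'2. apply Hw3; [|exact Hw'1].
      apply (pb_ext HK).
      + rewrite Hk1, comp_assoc, (proj1 HX2), <- comp_assoc, Hw'1. reflexivity.
      + rewrite Hk2, comp_assoc, <- Hphi1, <- comp_assoc, Hw'2. reflexivity. }
  assert (Hmiso : is_iso m).
  { apply (regepi_mono_iso (k := comp n2 j) Hphireg Hm).
    rewrite comp_assoc, <- (proj1 HN), <- comp_assoc, Hj2, comp_id_r. reflexivity. }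
  rewrite <- Hme. apply iso_regepi; assumption.
Qed.
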